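(* Let $b = (b(0), \dots, b(L-1))$ be a solution of length $L$. Then $$b(0) \ge L - \frac{1}{2} - \sqrt{2L + \frac{1}{4}}.$$
   Context: A solution of length $L \ge 1$ is a sequence $(b(0), \dots, b(L-1))$ of integers with $0 \le b(i) < L$ such that for every $0 \le i < L$, $b(i) = |\{ j : 0 \le j < L,\ b(j) = i\}|$. *)

(* Defs.v *)
From mathcomp Require Import all_boot.
From Stdlib Require Import Reals.
Set Implicit Arguments. Unset Strict Implicit. Unset Printing Implicit Defensive.

Definition is_solution (L : nat) (b : 'I_L -> 'I_L) : Prop :=
  forall i : 'I_L, nat_of_ord (b i) = #|[pred j : 'I_L | b j == i]|.

(* Main.v *)
Require Import Defs.
From mathcomp Require Import all_boot.
From Stdlib Require Import Reals.
From mathcomp Require Import zify.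
From Stdlib Require Import Lra.

Lemma card_le_max L (A : {set 'I_L}) (M : 'I_L) :
  (forall j, j \in A -> (j:nat) <= M) -> #|A| <= M.+1.
Proof.
move=> HM; rewrite cardE -(size_map (@nat_of_ord L)) -(size_iota 0 M.+1).
apply: uniq_leq_size; first by rewrite (map_inj_uniq val_inj) enum_uniq.
move=> x /mapP [y]; rewrite mem_enum => yA ->.
by rewrite mem_iota /= add0n ltnS HM.
Qed.

Lemma sum_distinct L n (A : {set 'I_L}) : #|A| = n ->
  n * n <= 2 * \sum_(i in A) (i:nat) + n.
Proof.
elim: n A => [|n IH] A HA; first by [].
have : 0 < #|A| by rewrite HA.
case/card_gt0P => m Am.
case: (arg_maxnP (fun i : 'I_L => (i:nat)) Am) => M MA Mmax.
have HnM := @card_le_max _ A M Mmax.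
rewrite (bigD1 M MA) /=.
have HA' : #|A :\ M| = n.
  by move: HA; rewrite (cardsD1 M A) (_ : M \in A = true) // add1n => -[].
have H := IH _ HA'.
have -> : \sum_(i < L | (i \in A) && (i != M)) (i:nat) = \sum_(i in A :\ M) (i:nat).
  by apply: eq_bigl => i; rewrite in_setD1 andbC.
rewrite HA in HnM. lia.
Qed.

Lemma sum_b L (b : 'I_L -> 'I_L) : is_solution b ->
  \sum_(i : 'I_L) (b i : nat) = L /\ \sum_(i : 'I_L) (i : nat) * b i = L.
Proof.
move=> hb.
have E : forall F : 'I_L -> nat, \sum_(i : 'I_L) F i * b i = \sum_(j : 'I_L) F (b j).
  move=> F.
  rewrite [RHS](partition_big b predT) //=.
  apply: eq_bigr => i _.
  rewrite hb -sum1_card big_distrr /= muln1.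
  rewrite [RHS](eq_bigr (fun _ => F i)); last by move=> j /eqP ->.
  by apply: congr_big.
have S1 : \sum_(i : 'I_L) (b i : nat) = L.
  rewrite (eq_bigr (fun i => 1 * b i)); last by move=> i _; rewrite mul1n.
  by rewrite E sum1_card card_ord.
by split => //; rewrite E.
Qed.

Lemma key L (HL : (1 <= L)%N) (b : 'I_L -> 'I_L) (hb : is_solution b) :
  exists k, (b (Ordinal HL) + k = L)%N /\ (k * k <= 2 * L + k)%N.
Proof.
set S := [set i : 'I_L | 0 < b i].
exists #|S|; split.
- rewrite hb -[in RHS](card_ord L) -(cardsC S) addnC.
  congr (_ + _); apply: eq_card => j; rewrite !inE lt0n negbK.
  by [].
- have H1 := @sum_distinct _ _ S erefl.
  have H2 : (\sum_(i in S) (i:nat) <= L)%N.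
    have [_ E2] := @sum_b _ b hb.
    suff H3 : (\sum_(i in S) (i:nat) <= \sum_(i : 'I_L) (i : nat) * b i)%N by rewrite E2 in H3.
    rewrite big_mkcond; apply: leq_sum => i _; rewrite inE.
    by case: ifP => // Hb; rewrite leq_pmulr.
  apply: leq_trans H1 _; by rewrite leq_add2r leq_mul2l H2 orbT.
Qed.

Theorem mainTheorem5 (L : nat) (HL : (1 <= L)%N) (b : 'I_L -> 'I_L)
  (hb : is_solution b) :
  (INR L - 1/2 - sqrt (2 * INR L + 1/4) <= INR (nat_of_ord (b (Ordinal HL))))%R.
Proof.
have [k [Hk Hkk]] := @key _ HL b hb.
have Hr : (INR k * INR k <= 2 * INR L + INR k)%R.
  have := le_INR _ _ (elimT leP Hkk).
  by rewrite plus_INR !mult_INR.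
have HL' : INR L = (INR (b (Ordinal HL)) + INR k)%R by rewrite -plus_INR; congr INR; symmetry; exact: Hk.
rewrite HL' in Hr. rewrite HL'.
have Hs0 := sqrt_pos (2 * (INR (b (Ordinal HL)) + INR k) + 1 / 4).
case: (Rle_lt_dec (INR k) (1/2)) => Hk2; first lra.
suff : (INR k - 1/2 <= sqrt (2 * (INR (b (Ordinal HL)) + INR k) + 1 / 4))%R by lra.
apply: Rsqr_incr_0_var => //.
have Hb0 := pos_INR (b (Ordinal HL)).
rewrite Rsqr_sqrt; last lra.
rewrite /Rsqr; lra.
Qed.
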